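(* Let $(\mathcal U,\mathcal F)$ be a strongly accessible set system and $S$ a nonempty maximal solution with canonical order $s_1,\dots,s_{|S|}$. Let $j$ be the smallest index such that $\mathrm{complete}(S[j])=S$, and suppose $j>1$. Put $\mathrm{pi}(S)=s_j$, $\mathrm{core}(S)=S[j-1]$, $\mathrm{parent}(S)=\mathrm{complete}(\mathrm{core}(S))$. Then $\mathrm{parent}(S)$ is a maximal solution with $\mathrm{parent}(S)\prec S$ (in particular $\mathrm{parent}(S)\neq S$), $\mathrm{core}(S)\subseteq \mathrm{parent}(S)$, $\mathrm{pi}(S)\notin\mathrm{core}(S)$, $\mathrm{core}(S)\cup\{\mathrm{pi}(S)\}\in\mathcal F$, and $S=\mathrm{complete}(\mathrm{core}(S)\cup\{\mathrm{pi}(S)\})$.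
   Context: A set system is a pair $(\mathcal U,\mathcal F)$ with $\mathcal U$ finite, $\mathcal F\subseteq 2^{\mathcal U}$, $\emptyset\in\mathcal F$; $S\in\mathcal F$ is maximal if there is no $Y\in\mathcal F$ with $S\subsetneq Y$. Strongly accessible: for all $X,Y\in\mathcal F$ with $X\subsetneq Y$ there is $z\in Y\setminus X$ with $X\cup\{z\}\in\mathcal F$. Elements of $\mathcal U$ are identified with distinct integers. For $X,A\subseteq\mathcal U$, $X^+_A=\{a\in A\setminus X: X\cup\{a\}\in\mathcal F\}$. $Z=\{x\in\mathcal U:\{x\}\in\mathcal F\}$, $\mathrm{source}(X)=\min(X\cap Z)$. For $X\in\mathcal F$ and $A\subseteq\mathcal U$, $\mathrm{complete}(X,A)$ is obtained by repeatedly replacing $X$ with $X\cup\{\min X^+_A\}$ while $X^+_A\neq\emptyset$, then returning $X$; $\mathrm{complete}(X)=\mathrm{complete}(X,\mathcal U)$. The canonical order of a nonempty maximal solution $S$ is $s_1=\mathrm{source}(S)$ and $s_{i+1}=\min S[i]^+_S$ while this set is nonempty, with $S[i]=\{s_1,\dots,s_i\}$. For maximal solutions $S\ne T$ with canonical orders $(s_i)$, $(t_i)$, let $i$ be the smallest index with $s_i\neq t_i$; $S\prec T$ iff $s_i<t_i$. *)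

(* Defs.v *)
From HB Require Import structures.
From mathcomp Require Import all_boot all_order.
Set Implicit Arguments. Unset Strict Implicit. Unset Printing Implicit Defensive.
Import Order.TTheory.
Local Open Scope order_scope.

(* The universe U is a finite totally ordered type T (elements identified
   with distinct integers, compared by their order); U = [set: T]. *)

Section SetSystems.
Context {d : Order.disp_t} {T : finOrderType d}.
Implicit Types (F : {set {set T}}) (X Y A S : {set T}).

Definition set_system F : Prop := set0 \in F.

Definition maximal F S : Prop :=
  S \in F /\ forall Y, Y \in F -> ~ (S \proper Y).

Definition strongly_accessible F : Prop :=
  forall X Y, X \in F -> Y \in F -> X \proper Y ->
    exists2 z, z \in Y :\: X & X :|: [set z] \in F.

Definition plus F X A : {set T} := [set a in A :\: X | X :|: [set a] \in F].

Definition smin A : option T := [pick x in A | [forall y in A, x <= y]].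

Definition Zset F : {set T} := [set x | [set x] \in F].
Definition source F X : option T := smin (X :&: Zset F).

(* complete(X, A): repeatedly add min X^+_A while nonempty.  Each step adds
   a new element, so #|T| iterations reach the fixpoint. *)
Definition complete_step F A X : {set T} :=
  match smin (plus F X A) with Some a => X :|: [set a] | None => X end.
Definition complete_in F X A : {set T} := iter #|T| (complete_step F A) X.
Definition complete F X : {set T} := complete_in F X setT.

Fixpoint canon_aux F S (n : nat) (X : {set T}) : seq T :=
  match n with
  | 0 => [::]
  | n'.+1 => match smin (plus F X S) with
             | Some a => a :: canon_aux F S n' (X :|: [set a])
             | None => [::]
             end
  end.
Definition canon F S : seq T :=
  match source F S with
  | Some s1 => s1 :: canon_aux F S #|T| [set s1]
  | None => [::]
  end.

Definition prefix_set F S (i : nat) : {set T} := [set x in take i (canon F S)].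

(* S ≺ T' : first differing index i (0-based here) has s_i < t_i *)
Definition prec F S S' : Prop :=
  S != S' /\
  exists (i : nat) (a b : T),
    [/\ onth (canon F S) i = Some a, onth (canon F S') i = Some b,
        take i (canon F S) = take i (canon F S') & a < b].
End SetSystems.

(* Main.v *)
Require Import Defs.
From mathcomp Require Import all_boot all_order.
Import Order.TTheory.
Set Implicit Arguments. Unset Strict Implicit.
Section L.
Local Open Scope order_scope.
Context {d : Order.disp_t} {T : finOrderType d}.
Implicit Types (F : {set {set T}}) (X Y A G : {set T}).

Lemma sminS A a : smin A = Some a -> a \in A /\ forall y, y \in A -> a <= y.
Proof.
rewrite /smin; case: pickP => // x /andP[xA /forall_inP H] [<-]; split=> //.
Qed.

Lemma sminN A : smin A = None -> A = set0.
Proof.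
rewrite /smin; case: pickP => // H _; apply/setP=> y; rewrite inE.
apply/negP=> yA.
case: (arg_minP (fun x => x) yA) => m mA mmin.
have mA1 : m \in A by []. have := H m; rewrite /= mA1 /=; move/negbT/negP; apply; apply/forall_inP=> z zA; exact: mmin.
Qed.

Lemma plusP F X A a : reflect [/\ a \in A, a \notin X & X :|: [set a] \in F] (a \in plus F X A).
Proof.
rewrite /plus !inE; apply: (iffP idP).
  by case/andP=> /andP[-> ->] ->.
by case=> -> -> ->.
Qed.

Lemma step_sub F A X : X \subset complete_step F A X.
Proof. rewrite /complete_step; case: smin => // a; exact: subsetUl. Qed.

Lemma step_in F A X : X \in F -> complete_step F A X \in F.
Proof.
rewrite /complete_step; case E: smin => [a|] // _.
by case: (sminS E) => /plusP[].
Qed.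

Lemma iter_sub F A X n : X \subset iter n (complete_step F A) X.
Proof.
elim: n => //= n IH; apply: subset_trans IH _; exact: step_sub.
Qed.

Lemma iter_in F A X n : X \in F -> iter n (complete_step F A) X \in F.
Proof. move=> XF; elim: n => //= n IH; exact: step_in. Qed.

Lemma step_card F A X : complete_step F A X != X -> #|complete_step F A X| = #|X|.+1.
Proof.
rewrite /complete_step; case E: smin => [a|]; last by rewrite eqxx.
case: (sminS E) => /plusP[_ aX _] _ _.
by rewrite setUC cardsU1 aX.
Qed.

Lemma iter_fix F A X n k : complete_step F A (iter k (complete_step F A) X) = iter k (complete_step F A) X ->
  iter (n + k) (complete_step F A) X = iter k (complete_step F A) X.
Proof. move=> H; elim: n => //= n IH; by rewrite IH. Qed.

Lemma complete_fix F X : complete_step F setT (complete F X) = complete F X.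
Proof.
set f := complete_step F setT.
have H : forall n, (exists2 k, (k <= n)%N & f (iter k f X) = iter k f X) \/ (n <= #|iter n f X|)%N.
  elim=> [|n [[k kn Hk]|IH]]; first by right.
    by left; exists k => //; apply: leqW.
  case: (eqVneq (f (iter n f X)) (iter n f X)) => Hn.
    by left; exists n.
  by right; rewrite /= step_card.
rewrite /complete /complete_in -/f.
case: (H #|T|) => [[k kn Hk]|Hc].
  by rewrite -(subnK kn) iter_fix.
have -> : iter #|T| f X = setT.
  by apply/eqP; rewrite eqEcard subsetT cardsT Hc.
rewrite /f /complete_step; case E: smin => [a|] //.
by case: (sminS E) => /plusP[_]; rewrite inE.
Qed.

Lemma complete_plus F X : plus F (complete F X) setT = set0.
Proof.
have := complete_fix F X; rewrite /complete_step; case E: smin => [a|] //.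
  case: (sminS E) => /plusP[_ aX _] _ H.
  by move: aX; rewrite -{1}H inE set11 orbT.
by move=> _; exact: sminN.
Qed.

Lemma complete_sub F X : X \subset complete F X.
Proof. exact: iter_sub. Qed.

Lemma complete_in_F F X : X \in F -> complete F X \in F.
Proof. exact: iter_in. Qed.

Lemma complete_max F X : strongly_accessible F -> X \in F -> maximal F (complete F X).
Proof.
move=> sa XF; split; first exact: complete_in_F.
move=> Y YF pY; case: (sa _ _ (complete_in_F XF) YF pY) => z /setDP[_ zC] zF.
have : z \in plus F (complete F X) setT by apply/plusP; rewrite inE.
by rewrite complete_plus inE.
Qed.

Lemma complete_first F X a : smin (plus F X setT) = Some a ->
  complete F X = complete F (X :|: [set a]).
Proof.
move=> E.
have Hs : complete_step F setT X = X :|: [set a] by rewrite /complete_step E.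
rewrite /complete /complete_in.
have [n hn] : exists n, #|T| = n.+1.
  by case E2: #|T| => [|n]; [move/card0_eq: E2 => /(_ a) | exists n].
have h1 : complete F X = iter n (complete_step F setT) (X :|: [set a]).
  by rewrite /complete /complete_in hn iterSr Hs.
transitivity (complete_step F setT (complete F X)); first by rewrite complete_fix.
by rewrite h1 /complete /complete_in hn iterS.
Qed.

Lemma aux_nth F G n X x0 i : (i < size (canon_aux F G n X))%N ->
  smin (plus F (X :|: [set x in take i (canon_aux F G n X)]) G) = Some (nth x0 (canon_aux F G n X) i).
Proof.
elim: n X i => [//|n IH] X i /=.
case E: smin => [a|] //=.
case: i => [_|i] /=.
  by rewrite ?take0 (_ : [set x in [::]] = set0) ?setU0 //; apply/setP=> y; rewrite !inE.
rewrite ltnS => /(IH (X :|: [set a])) <-.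
congr (smin (plus F _ G)); apply/setP=> y; rewrite !inE /= orbA; congr (_ || _).
Qed.

Lemma aux_size F G n X : (size (canon_aux F G n X) < n)%N ->
  smin (plus F (X :|: [set x in canon_aux F G n X]) G) = None.
Proof.
elim: n X => [//|n IH] X /=.
case E: smin => [a|] /=.
  rewrite ltnS => /IH <-; congr (smin (plus F _ G)); apply/setP=> y; rewrite !inE /= orbA //.
by move=> _; rewrite (_ : [set x in [::]] = set0) ?setU0 //; apply/setP=> y; rewrite !inE.
Qed.

Lemma canon_spec F G s1 x0 : source F G = Some s1 ->
  [/\ canon F G = s1 :: canon_aux F G #|T| [set s1],
      (forall i, (i.+1 < size (canon F G))%N ->
          smin (plus F [set x in take i.+1 (canon F G)] G) = Some (nth x0 (canon F G) i.+1)) &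
      ((size (canon F G) <= #|T|)%N -> smin (plus F [set x in canon F G] G) = None)].
Proof.
rewrite /canon => ->; split=> //.
  move=> i /= Hi; rewrite -(aux_nth x0 Hi); congr (smin (plus F _ G)).
  by apply/setP=> y; rewrite !inE.
move=> /= Hs; rewrite -(aux_size Hs); congr (smin (plus F _ G)).
by apply/setP=> y; rewrite !inE.
Qed.

Lemma onth_nth' (s : seq T) x0 i : (i < size s)%N -> onth s i = Some (nth x0 s i).
Proof. by move=> H; rewrite onthE (nth_map x0). Qed.

Lemma set_rcons (s : seq T) a : [set x in rcons s a] = [set x in s] :|: [set a].
Proof. by apply/setP=> y; rewrite !inE mem_rcons inE orbC. Qed.

Lemma sourceS F G s1 : source F G = Some s1 -> s1 \in G /\ [set s1] \in F.
Proof. by move/sminS=> [/setIP[H1 H2] _]; move: H2; rewrite inE. Qed.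

Lemma canon_prefix F G s1 i : source F G = Some s1 -> (i < size (canon F G))%N ->
  [set x in take i.+1 (canon F G)] \in F.
Proof.
move=> Hs; have [Hc Hn _] := canon_spec s1 Hs.
elim: i => [_|i IH Hi].
  rewrite Hc /= take0 (_ : [set x in [:: s1]] = [set s1]); first by case: (sourceS Hs).
  by apply/setP=> y; rewrite !inE.
rewrite (take_nth s1 Hi) set_rcons.
have := Hn _ Hi => /sminS [/plusP [_ _ ->] _] //.
Qed.

Lemma canon_plus F G s1 x0 i : source F G = Some s1 -> (i.+1 < size (canon F G))%N ->
  nth x0 (canon F G) i.+1 \in plus F [set x in take i.+1 (canon F G)] G /\
  forall y, y \in plus F [set x in take i.+1 (canon F G)] G -> nth x0 (canon F G) i.+1 <= y.
Proof. move=> Hs Hi; have [_ Hn _] := canon_spec x0 Hs; exact: sminS (Hn _ Hi). Qed.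

Lemma source_ex F G : set_system F -> strongly_accessible F -> G \in F -> G != set0 ->
  exists s1, source F G = Some s1.
Proof.
move=> s0 sa GF Gn; case E: (source F G) => [s1|]; first by exists s1.
have : set0 \proper G by rewrite properEneq eq_sym Gn sub0set.
case/(sa _ _ s0 GF) => z /setDP[zG _]; rewrite set0U => zF.
have := sminN E => /setP /(_ z); by rewrite !inE zG /= zF.
Qed.
End L.

Theorem mainTheorem4 (d : Order.disp_t) (T : finOrderType d)
    (F : {set {set T}}) (S : {set T}) (j : nat) :
  set_system F ->
  strongly_accessible F ->
  maximal F S ->
  S != set0 ->
  (1 <= j <= #|S|)%N ->
  complete F (prefix_set F S j) = S ->
  (forall k : nat, (1 <= k < j)%N -> complete F (prefix_set F S k) != S) ->
  (1 < j)%N ->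
  exists p : T,
    let core := prefix_set F S j.-1 in
    let parent := complete F core in
    onth (canon F S) j.-1 = Some p /\
    maximal F parent /\
    prec F parent S /\
    parent != S /\
    core \subset parent /\
    p \notin core /\
    core :|: [set p] \in F /\
    S = complete F (core :|: [set p]).
Proof.
move=> s0 sa [SF Smax] Sn /andP[j1 jS] Hj Hk j2.
have [s1 Hs] := source_ex s0 sa SF Sn.
have [Hc Hn Hsz] := canon_spec s1 Hs.
case: j j1 jS Hj Hk j2 => [|[|k]] // _ jS Hj Hk _.
have kc : (k.+1 < size (canon F S))%N.
  rewrite ltnNge; apply/negP=> hc.
  have := Hk k.+1; rewrite ltnSn andbT /= => /(_ isT); rewrite /prefix_set.
  move: Hj; rewrite /prefix_set (take_oversize hc) take_oversize ?(leqW hc) // => ->.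
  by rewrite eqxx.
set core := [set x in take k.+1 (canon F S)].
have Ecore : prefix_set F S k.+1 = core by [].
set p := nth s1 (canon F S) k.+1.
have [pplus pmin] := canon_plus s1 Hs kc.
have pplus' := pplus; case/plusP: pplus' => pS pcore coreF.
have Sj : prefix_set F S k.+2 = core :|: [set p].
  by rewrite /prefix_set (take_nth s1 kc) set_rcons.
have coreF' : core \in F := canon_prefix Hs (ltnW kc).
have s1core : s1 \in core by rewrite /core Hc inE /= in_cons eqxx.
set P := complete F core.
have Pmax : maximal F P := complete_max sa coreF'.
have PS : P != S by have := Hk k.+1; rewrite ltnSn /= Ecore; apply.
have coreP : core \subset P := complete_sub F core.
have pT : p \in plus F core setT by apply/plusP; rewrite inE.
case Em: (smin (plus F core setT)) => [m|]; last first.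
  by move: pT; rewrite (sminN Em) inE.
have [mplus mmin] := sminS Em; case/plusP: mplus => _ mcore coremF.
have mp : (m <= p)%O := mmin p pT.
have mneq : m != p.
  apply/eqP => emp; move/eqP: PS; apply; rewrite /P (complete_first Em) emp -Sj //.
have mlt : (m < p)%O by rewrite lt_neqAle mneq mp.
have mP : m \in P.
  rewrite /P (complete_first Em); apply: (subsetP (complete_sub _ _)).
  by rewrite in_setU in_set1 eqxx orbT.
have s1P : s1 \in P by apply: (subsetP coreP).
have s1Z : s1 \in Zset F by case: (sourceS Hs) => _; rewrite inE.
have [t1 Ht] : exists t1, source F P = Some t1.
  case E: (source F P) => [t1|]; first by exists t1.
  by have := sminN E => /setP /(_ s1); rewrite !inE s1P /=; rewrite inE in s1Z; rewrite s1Z.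
have [HcP HnP HszP] := canon_spec s1 Ht.
have t1s1 : (t1 <= s1)%O.
  have [_ tmin] := sminS Ht; apply: tmin; by rewrite in_setI s1P.
have ST : (#|S| <= #|T|)%N := max_card _.
have key : forall i, (i <= k.+1)%N -> take i (canon F P) = take i (canon F S) ->
   [/\ (i < size (canon F P))%N, (nth s1 (canon F P) i <= nth s1 (canon F S) i)%O &
       (i = k.+1 -> (nth s1 (canon F P) i < nth s1 (canon F S) i)%O)].
  case=> [|i] ik Heq.
    by rewrite HcP Hc /=; split.
  set X := [set x in take i.+1 (canon F S)].
  have [y [yplus ylt ystrict]] : exists y, [/\ y \in plus F X P,
       (y <= nth s1 (canon F S) i.+1)%O & (i.+1 = k.+1 -> (y < nth s1 (canon F S) i.+1)%O)].
    case: (ltnP i.+1 k.+1) => hi.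
      exists (nth s1 (canon F S) i.+1).
      have [ypl _] := canon_plus s1 Hs (ltn_trans hi kc); case/plusP: ypl => _ yX yF.
      split => //; last by move=> e; rewrite e ltnn in hi.
      apply/plusP; split => //; apply: (subsetP coreP).
      rewrite /core inE -(nth_take s1 hi); apply: mem_nth; by rewrite size_take kc.
    have ei : i = k by apply/eqP; rewrite eqn_leq; rewrite ltnS in hi; rewrite hi andbT.
    rewrite /X ei; exists m; split => //; first by apply/plusP.
  have XcP : [set x in take i.+1 (canon F P)] = X by rewrite Heq.
  have szP : (i.+1 < size (canon F P))%N.
    rewrite ltnNge; apply/negP => hs.
    have hT : (size (canon F P) <= #|T|)%N.
      apply: leq_trans hs _; apply: leq_trans ik _; apply: leq_trans ST; exact: ltnW.
    have := HszP hT; rewrite -(take_oversize hs) XcP => /sminN /setP /(_ y).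
    by rewrite yplus inE.
  have [_ Pmin] := canon_plus s1 Ht szP; rewrite XcP in Pmin.
  have hle := Pmin y yplus.
  split => //; first exact: le_trans hle ylt.
  by move=> e; apply: le_lt_trans hle (ystrict e).
have ind : forall i, (i <= k.+1)%N ->
   (exists (i0 : nat) (a b : T), [/\ onth (canon F P) i0 = Some a, onth (canon F S) i0 = Some b,
        take i0 (canon F P) = take i0 (canon F S) & (a < b)%O])
   \/ take i (canon F P) = take i (canon F S).
  elim=> [_|i IH hi]; first by right; rewrite !take0.
  case: (IH (ltnW hi)) => [W|Heq]; first by left.
  have [szP le _] := key i (ltnW hi) Heq.
  have szS : (i < size (canon F S))%N := ltn_trans hi kc.
  rewrite le_eqVlt in le; case/orP: le => [/eqP e|lt].
    by right; rewrite (take_nth s1 szP) (take_nth s1 szS) Heq e.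
  left; exists i, (nth s1 (canon F P) i), (nth s1 (canon F S) i).
  by split => //; apply: onth_nth'.
have Hprec : prec F P S.
  split => //.
  case: (ind k.+1 (leqnn _)) => [//|Heq].
  have [szP _ st] := key k.+1 (leqnn _) Heq.
  exists k.+1, (nth s1 (canon F P) k.+1), (nth s1 (canon F S) k.+1).
  by split => //; [apply: onth_nth' | apply: onth_nth' | apply: st].
exists p; cbv zeta; rewrite [k.+2.-1]/=.
rewrite Ecore -Sj Hj Sj; split; first exact: onth_nth'.
split; first exact: Pmax. split; first exact: Hprec. split; first exact: PS. split; first exact: coreP. by split.
Qed.
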